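(* Let $G$ be a finite simple cubic graph with no subgraph (not necessarily induced) isomorphic to $L$. Then $G$ has an $\mathcal{F}$-partitioning, i.e., there exist pairwise vertex-disjoint subgraphs $Q_1,\dots,Q_k$ of $G$ (not necessarily induced) with $V(Q_1)\cup\dots\cup V(Q_k)=V(G)$, such that each $Q_i$ is isomorphic to one of the graphs $C_3$, $C_4$, $K_{2,3}$, $X$, $Y$, $Z$.
   Context: All graphs are finite and simple. The graph $L$ is the tree on $10$ vertices consisting of a central vertex $c$ adjacent to three vertices $x_1,x_2,x_3$, where each $x_i$ is further adjacent to two leaves $y_{i,1},y_{i,2}$ (all ten vertices distinct; $9$ edges). $C_n$ denotes the cycle on $n$ vertices and $K_{2,3}$ the complete bipartite graph with parts of sizes $2$ and $3$. The graph $X$ (the ''house'') has vertices $a,b,c,d,e$ and edges $ab,bc,cd,da,ea,eb$ (a $4$-cycle and a triangle sharing the edge $ab$). The graph $Y$ (the $2\times 3$ grid / domino) has vertices $a_1,a_2,a_3,b_1,b_2,b_3$ and edges $a_1a_2,a_2a_3,b_1b_2,b_2b_3,a_1b_1,a_2b_2,a_3b_3$. The graph $Z$ is obtained from $Y$ by adding a new vertex $w$ adjacent to $a_1$ and $a_3$. An $\mathcal{F}$-partitioning of $G$, for the family $\mathcal{F}=\{C_3,C_4,K_{2,3},X,Y,Z\}$, is a set of pairwise vertex-disjoint subgraphs of $G$, each isomorphic to a member of $\mathcal{F}$, covering every vertex of $G$. *)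

(* Defs.v *)
(* A simple graph is a finType T with a symmetric irreflexive
   adjacency relation e : rel T. *)
From mathcomp Require Import all_boot.
Set Implicit Arguments. Unset Strict Implicit. Unset Printing Implicit Defensive.

Definition cubic (T : finType) (e : rel T) : Prop :=
  forall x : T, #|[set y | e x y]| = 3.

(* A small pattern graph on vertex set 'I_n given by an (undirected) edge list. *)
Definition embeds (T : finType) (e : rel T) (n : nat) (E : seq (nat * nat))
    (f : 'I_n -> T) : Prop :=
  injective f /\
  forall i j : 'I_n, (nat_of_ord i, nat_of_ord j) \in E -> e (f i) (f j).

(* The tree L: c=0, x1,x2,x3 = 1,2,3, leaves of x1: 4,5; of x2: 6,7; of x3: 8,9. *)
Definition L_edges : seq (nat * nat) :=
  [:: (0,1); (0,2); (0,3); (1,4); (1,5); (2,6); (2,7); (3,8); (3,9)].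

Definition contains_L (T : finType) (e : rel T) : Prop :=
  exists f : 'I_10 -> T, embeds e L_edges f.

Inductive Fgraph := FC3 | FC4 | FK23 | FX | FY | FZ.

Definition Fnv (H : Fgraph) : nat :=
  match H with FC3 => 3 | FC4 => 4 | FK23 => 5 | FX => 5 | FY => 6 | FZ => 7 end.

Definition Fedges (H : Fgraph) : seq (nat * nat) :=
  match H with
  | FC3 => [:: (0,1); (1,2); (2,0)]
  | FC4 => [:: (0,1); (1,2); (2,3); (3,0)]
  (* parts {0,1} and {2,3,4} *)
  | FK23 => [:: (0,2); (0,3); (0,4); (1,2); (1,3); (1,4)]
  (* a=0,b=1,c=2,d=3,e=4: ab,bc,cd,da,ea,eb *)
  | FX => [:: (0,1); (1,2); (2,3); (3,0); (4,0); (4,1)]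
  (* a1=0,a2=1,a3=2,b1=3,b2=4,b3=5 *)
  | FY => [:: (0,1); (1,2); (3,4); (4,5); (0,3); (1,4); (2,5)]
  (* Y plus w=6 adjacent to a1=0 and a3=2 *)
  | FZ => [:: (0,1); (1,2); (3,4); (4,5); (0,3); (1,4); (2,5); (6,0); (6,2)]
  end.

Definition spans_copy (T : finType) (e : rel T) (H : Fgraph) (B : {set T}) : Prop :=
  exists f : 'I_(Fnv H) -> T, embeds e (Fedges H) f /\ B = [set f i | i in 'I_(Fnv H)].

Definition F_partitioning (T : finType) (e : rel T) : Prop :=
  exists P : {set {set T}},
    partition P [set: T] /\
    forall B, B \in P -> exists H : Fgraph, spans_copy e H B.

(* Main.v *)
Require Import Defs.
From mathcomp Require Import all_boot zify.
From HB Require Import structures.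
Set Implicit Arguments. Unset Strict Implicit. Unset Printing Implicit Defensive.

Lemma Fgraph_eq_dec : comparable Fgraph. Proof. by move=> x y; rewrite /decidable; decide equality. Qed.
HB.instance Definition _ := hasDecEq.Build Fgraph (compareP Fgraph_eq_dec).

Definition allF := [:: FC3; FC4; FK23; FX; FY; FZ].
Definition fcode (H : Fgraph) : nat :=
  match H with FC3 => 0 | FC4 => 1 | FK23 => 2 | FX => 3 | FY => 4 | FZ => 5 end.

Definition symE (E : seq (nat*nat)) := E ++ [seq (ab.2, ab.1) | ab <- E].
Definition adj H i j := ((i,j) \in Fedges H) || ((j,i) \in Fedges H).
Definition pdeg H i := count (adj H i) (iota 0 (Fnv H)).

Definition EKA H i j := let n := Fnv H in symE (Fedges H ++ [:: (n, i); (n, j)]).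
Definition EKB H i j := let n := Fnv H in symE (Fedges H ++ [:: (n, i); (n.+1, j); (n, n.+1)]).

Definition checkR (N : nat) (EK : seq (nat*nat)) (H : Fgraph) (s : seq nat) : bool :=
  (size s == Fnv H) && uniq s && all (fun k => k < N) s &&
  all (fun ab => (nth 0 s ab.1, nth 0 s ab.2) \in EK) (Fedges H).

Definition checkRs N EK (rs : seq (Fgraph * seq nat)) :=
  all (fun r => checkR N EK r.1 r.2) rs && uniq (flatten [seq r.2 | r <- rs]).

Definition condA H i j := (i != j) && (pdeg H i == 2) && (pdeg H j == 2) &&
  (adj H i j || has (fun k => adj H i k && adj H k j) (iota 0 (Fnv H))).
Definition condB H i j := (pdeg H i == 2) && (pdeg H j == 2) && adj H i j.
Definition tabA : seq (Fgraph * nat * nat * seq (Fgraph * seq nat)) := [::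
  (FC3, 0, 1, [:: (FC4, [:: 0; 2; 1; 3])]);
  (FC3, 0, 2, [:: (FC4, [:: 0; 1; 2; 3])]);
  (FC3, 1, 0, [:: (FC4, [:: 0; 2; 1; 3])]);
  (FC3, 1, 2, [:: (FC4, [:: 0; 1; 3; 2])]);
  (FC3, 2, 0, [:: (FC4, [:: 0; 1; 2; 3])]);
  (FC3, 2, 1, [:: (FC4, [:: 0; 1; 3; 2])]);
  (FC4, 0, 1, [:: (FX, [:: 0; 1; 2; 3; 4])]);
  (FC4, 0, 2, [:: (FK23, [:: 0; 2; 1; 3; 4])]);
  (FC4, 0, 3, [:: (FX, [:: 0; 3; 2; 1; 4])]);
  (FC4, 1, 0, [:: (FX, [:: 0; 1; 2; 3; 4])]);
  (FC4, 1, 2, [:: (FX, [:: 1; 2; 3; 0; 4])]);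
  (FC4, 1, 3, [:: (FK23, [:: 1; 3; 0; 2; 4])]);
  (FC4, 2, 0, [:: (FK23, [:: 0; 2; 1; 3; 4])]);
  (FC4, 2, 1, [:: (FX, [:: 1; 2; 3; 0; 4])]);
  (FC4, 2, 3, [:: (FX, [:: 2; 3; 0; 1; 4])]);
  (FC4, 3, 0, [:: (FX, [:: 0; 3; 2; 1; 4])]);
  (FC4, 3, 1, [:: (FK23, [:: 1; 3; 0; 2; 4])]);
  (FC4, 3, 2, [:: (FX, [:: 2; 3; 0; 1; 4])]);
  (FK23, 2, 3, [:: (FY, [:: 0; 2; 5; 4; 1; 3])]);
  (FK23, 2, 4, [:: (FY, [:: 0; 2; 5; 3; 1; 4])]);
  (FK23, 3, 2, [:: (FY, [:: 0; 2; 5; 4; 1; 3])]);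
  (FK23, 3, 4, [:: (FY, [:: 0; 3; 5; 2; 1; 4])]);
  (FK23, 4, 2, [:: (FY, [:: 0; 2; 5; 3; 1; 4])]);
  (FK23, 4, 3, [:: (FY, [:: 0; 3; 5; 2; 1; 4])]);
  (FX, 2, 3, [:: (FC3, [:: 0; 1; 4]); (FC3, [:: 2; 3; 5])]);
  (FX, 2, 4, [:: (FY, [:: 0; 1; 4; 3; 2; 5])]);
  (FX, 3, 2, [:: (FC3, [:: 0; 1; 4]); (FC3, [:: 2; 3; 5])]);
  (FX, 3, 4, [:: (FY, [:: 1; 0; 4; 2; 3; 5])]);
  (FX, 4, 2, [:: (FY, [:: 0; 1; 4; 3; 2; 5])]);
  (FX, 4, 3, [:: (FY, [:: 1; 0; 4; 2; 3; 5])]);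
  (FY, 0, 2, [:: (FZ, [:: 0; 1; 2; 3; 4; 5; 6])]);
  (FY, 0, 3, [:: (FC3, [:: 0; 3; 6]); (FC4, [:: 1; 2; 5; 4])]);
  (FY, 2, 0, [:: (FZ, [:: 0; 1; 2; 3; 4; 5; 6])]);
  (FY, 2, 5, [:: (FC3, [:: 2; 5; 6]); (FC4, [:: 0; 1; 4; 3])]);
  (FY, 3, 0, [:: (FC3, [:: 0; 3; 6]); (FC4, [:: 1; 2; 5; 4])]);
  (FY, 3, 5, [:: (FZ, [:: 1; 4; 3; 2; 5; 6; 0])]);
  (FY, 5, 2, [:: (FC3, [:: 2; 5; 6]); (FC4, [:: 0; 1; 4; 3])]);
  (FY, 5, 3, [:: (FZ, [:: 1; 4; 3; 2; 5; 6; 0])]);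
  (FZ, 3, 5, [:: (FC4, [:: 0; 1; 2; 6]); (FC4, [:: 3; 4; 5; 7])]);
  (FZ, 3, 6, [:: (FC4, [:: 0; 3; 7; 6]); (FC4, [:: 1; 2; 5; 4])]);
  (FZ, 5, 3, [:: (FC4, [:: 0; 1; 2; 6]); (FC4, [:: 3; 4; 5; 7])]);
  (FZ, 5, 6, [:: (FC4, [:: 0; 1; 4; 3]); (FC4, [:: 2; 5; 7; 6])]);
  (FZ, 6, 3, [:: (FC4, [:: 0; 3; 7; 6]); (FC4, [:: 1; 2; 5; 4])]);
  (FZ, 6, 5, [:: (FC4, [:: 0; 1; 4; 3]); (FC4, [:: 2; 5; 7; 6])])].
Definition tabB : seq (Fgraph * nat * nat * seq (Fgraph * seq nat)) := [::
  (FC3, 0, 1, [:: (FC4, [:: 0; 1; 4; 3])]);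
  (FC3, 0, 2, [:: (FC4, [:: 0; 2; 4; 3])]);
  (FC3, 1, 0, [:: (FC4, [:: 0; 1; 3; 4])]);
  (FC3, 1, 2, [:: (FC4, [:: 1; 2; 4; 3])]);
  (FC3, 2, 0, [:: (FC4, [:: 0; 2; 3; 4])]);
  (FC3, 2, 1, [:: (FC4, [:: 1; 2; 3; 4])]);
  (FC4, 0, 1, [:: (FY, [:: 2; 1; 5; 3; 0; 4])]);
  (FC4, 0, 3, [:: (FY, [:: 1; 0; 4; 2; 3; 5])]);
  (FC4, 1, 0, [:: (FY, [:: 2; 1; 4; 3; 0; 5])]);
  (FC4, 1, 2, [:: (FY, [:: 0; 1; 4; 3; 2; 5])]);
  (FC4, 2, 1, [:: (FY, [:: 0; 1; 5; 3; 2; 4])]);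
  (FC4, 2, 3, [:: (FY, [:: 0; 3; 5; 1; 2; 4])]);
  (FC4, 3, 0, [:: (FY, [:: 1; 0; 5; 2; 3; 4])]);
  (FC4, 3, 2, [:: (FY, [:: 0; 3; 4; 1; 2; 5])]);
  (FX, 2, 3, [:: (FY, [:: 0; 3; 6; 1; 2; 5])]);
  (FX, 3, 2, [:: (FY, [:: 0; 3; 5; 1; 2; 6])]);
  (FY, 0, 3, [:: (FC4, [:: 0; 3; 7; 6]); (FC4, [:: 1; 2; 5; 4])]);
  (FY, 2, 5, [:: (FC4, [:: 0; 1; 4; 3]); (FC4, [:: 2; 5; 7; 6])]);
  (FY, 3, 0, [:: (FC4, [:: 0; 3; 6; 7]); (FC4, [:: 1; 2; 5; 4])]);
  (FY, 5, 2, [:: (FC4, [:: 0; 1; 4; 3]); (FC4, [:: 2; 5; 6; 7])])].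

Definition lookup (tab : seq (Fgraph * nat * nat * seq (Fgraph * seq nat))) H i j :=
  match [seq r.2 | r <- tab & (fcode r.1.1.1 == fcode H) && (r.1.1.2 == i) && (r.1.2 == j)] with
  | r :: _ => r | [::] => [::] end.

Definition okR N n EK rs := checkRs N EK rs && (n < size (flatten [seq r.2 | r <- rs])).

Definition allA H := all (fun i => all (fun j => condA H i j ==>
   okR (Fnv H).+1 (Fnv H) (EKA H i j) (lookup tabA H i j)) (iota 0 (Fnv H))) (iota 0 (Fnv H)).
Definition allB H := all (fun i => all (fun j => condB H i j ==>
   okR (Fnv H).+2 (Fnv H) (EKB H i j) (lookup tabB H i j)) (iota 0 (Fnv H))) (iota 0 (Fnv H)).

Lemma compA H : allA H. Proof. by case: H; vm_compute. Qed.
Lemma compB H : allB H. Proof. by case: H; vm_compute. Qed.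
Lemma comp_deg H i : i < Fnv H -> 2 <= pdeg H i.
Proof. by case: H; do 7? (case: i => [|i] //). Qed.
Lemma comp_rng H : all (fun ab => (ab.1 < Fnv H) && (ab.2 < Fnv H)) (Fedges H).
Proof. by case: H. Qed.

Section Gen.
Variable T : finType.

Lemma disjP (A B : {set T}) : reflect (forall x, x \in A -> x \notin B) [disjoint A & B].
Proof.
rewrite disjoints_subset; apply: (iffP subsetP) => H x /H; by rewrite ?inE.
Qed.

Lemma in_cover (P : {set {set T}}) x : reflect (exists2 B, B \in P & x \in B) (x \in cover P).
Proof. by rewrite /cover; apply: (iffP bigcupP). Qed.

Lemma card_cover_disj (P1 P2 : {set {set T}}) :
  [disjoint cover P1 & cover P2] -> #|cover (P1 :|: P2)| = #|cover P1| + #|cover P2|.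
Proof.
move=> d; rewrite /cover bigcup_setU cardsU -/(cover P1) -/(cover P2).
by rewrite (disjoint_setI0 d) cards0 subn0.
Qed.

Lemma improve_gen (blk : {set T} -> Prop) (P S Q : {set {set T}}) :
  trivIset P -> (forall B, B \in P -> blk B) -> S \subset P ->
  trivIset Q -> (forall B, B \in Q -> blk B) ->
  cover Q \subset cover S :|: ~: cover P -> #|cover S| < #|cover Q| ->
  exists P', [/\ trivIset P', (forall B, B \in P' -> blk B) & #|cover P| < #|cover P'|].
Proof.
move=> tP bP sSP tQ bQ sQ lt.
have K1 : forall A, A \in P :\: S -> forall x, x \in A -> x \notin cover S :|: ~: cover P.
  move=> A; rewrite inE => /andP [AS AP] x xA; rewrite !inE negb_or negbK.
  apply/andP; split; last by apply/in_cover; exists A.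
  apply/in_cover => -[B BS xB].
  have BP : B \in P := subsetP sSP _ BS.
  have neq : A != B by apply: contraNneq AS => ->.
  by move/trivIsetP: tP => /(_ A B AP BP neq) /disjP /(_ x xA); rewrite xB.
have D1 : [disjoint cover (P :\: S) & cover Q].
  apply/disjP => x /in_cover [A AD xA]; apply: contra (K1 A AD x xA).
  by move/(subsetP sQ).
exists ((P :\: S) :|: Q); split.
- apply/trivIsetP => A B /setUP [AD|AQ] /setUP [BD|BQ] neq.
  + move: AD BD; rewrite !inE => /andP [_ AP] /andP [_ BP].
    by move/trivIsetP: tP; apply.
  + apply/disjP => x xA; apply: contra (K1 A AD x xA) => xB.
    by apply: (subsetP sQ); apply/in_cover; exists B.
  + rewrite disjoint_sym; apply/disjP => x xB; apply: contra (K1 B BD x xB) => xA.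
    by apply: (subsetP sQ); apply/in_cover; exists A.
  + by move/trivIsetP: tQ; apply.
- by move=> B; rewrite !inE => /orP [/andP [_ /bP] | /bQ].
- rewrite card_cover_disj //.
  have eP : P = (P :\: S) :|: S.
    apply/setP => x; rewrite !inE; case: (boolP (x \in S)) => //= xS; last by rewrite orbF.
    by rewrite (subsetP sSP _ xS).
  have D2 : [disjoint cover (P :\: S) & cover S].
    apply/disjP => y /in_cover [A AD yA]; apply: contra (K1 A AD y yA).
    by rewrite inE => ->.
  by rewrite {1}eP card_cover_disj // ltn_add2l.
Qed.
End Gen.

Lemma uniq_flatten_same (A : eqType) (L : seq (seq A)) a b k :
  uniq (flatten L) -> a \in L -> b \in L -> k \in a -> k \in b -> a = b.
Proof.
elim: L => [|c L IH] //=; rewrite cat_uniq => /and3P [uc hc uL].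
rewrite !inE => /orP [/eqP ->|aL] /orP [/eqP ->|bL] ka kb //.
- case/hasP: hc; exists k => //; apply/flattenP; by exists b.
- case/hasP: hc; exists k => //; apply/flattenP; by exists a.
- exact: IH.
Qed.

Section Rec.
Variable T : finType.
Variable e : rel T.
Variable x0 : T.
Variable gs : seq T.
Variable EK : seq (nat * nat).
Hypothesis ugs : uniq gs.
Hypothesis EKok : forall p q, (p, q) \in EK -> e (nth x0 gs p) (nth x0 gs q).

Definition blkset (s : seq nat) : {set T} := [set x in [seq nth x0 gs k | k <- s]].

Lemma nth_gs_inj (s : seq nat) : all (fun k => k < size gs) s -> {in s &, injective (nth x0 gs)}.
Proof.
move=> /allP a p q ps qs /eqP; rewrite nth_uniq ?a //; by move/eqP.
Qed.

Lemma recipe_blk H s : checkR (size gs) EK H s -> spans_copy e H (blkset s).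
Proof.
case/andP => /andP [/andP [/eqP sz us] al] ed.
pose h (i : 'I_(Fnv H)) := nth x0 gs (nth 0 s i).
have lt (i : 'I_(Fnv H)) : (i : nat) < size s by rewrite sz ltn_ord.
rewrite /spans_copy /embeds; exists h; split; first split.
- move=> i j /eqP; rewrite /h nth_uniq ?(allP al) ?mem_nth ?lt // nth_uniq ?lt //.
  by move/eqP/val_inj.
- move=> i j ij; apply: EKok; exact: (allP ed _ ij).
- apply/setP => x; rewrite inE; apply/mapP/imsetP.
  + case=> k /(nthP 0) [m ms <-] ->.
    have mH : m < Fnv H by rewrite -sz.
    by exists (Ordinal mH).
  + by case=> i _ ->; exists (nth 0 s i); rewrite ?mem_nth ?lt.
Qed.

Definition recQ (rs : seq (Fgraph * seq nat)) : {set {set T}} :=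
  [set B in [seq blkset r.2 | r <- rs]].

Lemma recQ_prop rs : checkRs (size gs) EK rs ->
  [/\ trivIset (recQ rs), (forall B, B \in recQ rs -> exists H, spans_copy e H B),
      cover (recQ rs) = [set x in [seq nth x0 gs k | k <- flatten [seq r.2 | r <- rs]]] &
      #|cover (recQ rs)| = size (flatten [seq r.2 | r <- rs])].
Proof.
rewrite /checkRs => /andP [ca0 uf]; have ca := allP ca0.
have alf : all (fun k => k < size gs) (flatten [seq r.2 | r <- rs]).
  apply/allP => k /flatten_mapP [r rr kr].
  by case/andP: (ca r rr) => /andP [_ /allP al] _; apply: al.
have cov : cover (recQ rs) = [set x in [seq nth x0 gs k | k <- flatten [seq r.2 | r <- rs]]].
  apply/setP => x; rewrite inE; apply/in_cover/mapP.
  + case=> B; rewrite inE => /mapP [r rr ->]; rewrite inE => /mapP [k kr ->].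
    by exists k => //; apply/flatten_mapP; exists r.
  + case=> k /flatten_mapP [r rr kr] ->; exists (blkset r.2).
      by rewrite inE; apply/mapP; exists r.
    by rewrite inE; apply/mapP; exists k.
split => //.
- apply/trivIsetP => A B; rewrite !inE => /mapP [r1 r1r ->] /mapP [r2 r2r ->] neq.
  apply/disjP => x; rewrite !inE => /mapP [k1 k1r ->]; apply/negP => /mapP [k2 k2r].
  have al1 : all (fun k => k < size gs) r1.2 by case/andP: (ca r1 r1r) => /andP [_ ->].
  have al2 : all (fun k => k < size gs) r2.2 by case/andP: (ca r2 r2r) => /andP [_ ->].
  have lt1 := allP al1 k1 k1r; have lt2 := allP al2 k2 k2r.
  move/eqP; rewrite nth_uniq // => /eqP e12.
  move: k2r; rewrite -e12 => k2r.
  have := uniq_flatten_same uf (map_f _ r1r) (map_f _ r2r) k1r k2r.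
  by move=> eq; move: neq; rewrite eq eqxx.
- move=> B; rewrite inE => /mapP [r rr ->]; exists r.1; apply: recipe_blk; exact: ca.
- rewrite cov cardsE.
  have /card_uniqP -> : uniq [seq nth x0 gs k | k <- flatten [seq r.2 | r <- rs]].
    by rewrite map_inj_in_uniq //; exact: nth_gs_inj.
  by rewrite size_map.
Qed.
End Rec.

Lemma card_pdeg H i : #|[set j : 'I_(Fnv H) | adj H i j]| = pdeg H i.
Proof.
rewrite cardsE cardE /pdeg -val_enum_ord count_map.
by rewrite /enum_mem size_filter (@eq_filter _ _ predT) ?filter_predT.
Qed.

Lemma enum3 (T : finType) (A : {set T}) : #|A| = 3 ->
  exists a b c, [/\ uniq [:: a; b; c] & forall y, (y \in A) = (y \in [:: a; b; c])].
Proof.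
rewrite cardE => sz; have u := enum_uniq (mem A); have m := mem_enum (mem A).
move: sz u m; case: (enum _) => [|a [|b [|c [|d l]]]] //= _ u m.
by exists a, b, c; split; [rewrite /= |move=> y; rewrite -m].
Qed.

Lemma enum2 (T : finType) (A : {set T}) : #|A| = 2 ->
  exists a b, [/\ a != b & forall y, (y \in A) = (y \in [:: a; b])].
Proof.
rewrite cardE => sz; have u := enum_uniq (mem A); have m := mem_enum (mem A).
move: sz u m; case: (enum _) => [|a [|b [|c l]]] //= _ u m.
exists a, b; split; [by move: u; rewrite /= inE andbT |by move=> y; rewrite -m].
Qed.

Lemma nth_gs_f (T : Type) n (f : 'I_n -> T) rest x0 (k : 'I_n) :
  nth x0 (map f (enum 'I_n) ++ rest) k = f k.
Proof.
by rewrite nth_cat size_map size_enum_ord ltn_ord (nth_map k) ?size_enum_ord // nth_ord_enum.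
Qed.

Lemma nth_gs_r (T : Type) n (f : 'I_n -> T) rest x0 m :
  nth x0 (map f (enum 'I_n) ++ rest) (n + m) = nth x0 rest m.
Proof. by rewrite nth_cat size_map size_enum_ord ltnNge leq_addr /= addKn. Qed.

Section Main.
Variable T : finType.
Variable e : rel T.
Hypothesis hsym : symmetric e.
Hypothesis hirr : irreflexive e.
Hypothesis hcub : cubic e.
Hypothesis hL : ~ contains_L e.

Definition blk (B : {set T}) := exists H, spans_copy e H B.

Lemma EKok_sym (g : nat -> T) E : (forall p q, (p, q) \in E -> e (g p) (g q)) ->
  forall p q, (p, q) \in symE E -> e (g p) (g q).
Proof.
move=> h p q; rewrite mem_cat => /orP [/h //|/mapP [[a b] ab [-> ->]] /=].
rewrite hsym; exact: h.
Qed.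

Lemma step_gen (P S : {set {set T}}) gs EK rs x0 :
  trivIset P -> (forall B, B \in P -> blk B) -> S \subset P -> uniq gs ->
  (forall p q, (p, q) \in EK -> e (nth x0 gs p) (nth x0 gs q)) ->
  {subset gs <= cover S :|: ~: cover P} -> checkRs (size gs) EK rs ->
  #|cover S| < size (flatten [seq r.2 | r <- rs]) ->
  exists P', [/\ trivIset P', (forall B, B \in P' -> blk B) & #|cover P| < #|cover P'|].
Proof.
move=> tP bP sSP ugs EKok sub ch lt.
have [tQ bQ cQ kQ] := recQ_prop ugs EKok ch.
apply: (improve_gen tP bP sSP tQ bQ); last by rewrite kQ.
rewrite cQ; apply/subsetP => x; rewrite inE => /mapP [k kf ->]; apply: sub.
apply: mem_nth; move: ch => /andP [/allP ca _]; move: kf => /flatten_mapP [r rr kr].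
by case/andP: (ca r rr) => /andP [_ /allP al] _; apply: al.
Qed.

Lemma out_deg H (f : 'I_(Fnv H) -> T) i w :
  embeds e (Fedges H) f -> e (f i) w -> w \notin [set f k | k in 'I_(Fnv H)] ->
  pdeg H i = 2 /\ (forall y, e (f i) y -> y != w -> exists2 j : 'I_(Fnv H), adj H i j & y = f j)
  /\ (forall w', e (f i) w' -> w' \notin [set f k | k in 'I_(Fnv H)] -> w' = w).
Proof.
move=> [fi fe] ew wB.
set PN := [set j : 'I_(Fnv H) | adj H i j].
have sub : f @: PN \subset [set y | e (f i) y] :\ w.
  apply/subsetP => y /imsetP [j]; rewrite inE => /orP [a|a] ->; rewrite !inE.
  - rewrite (fe _ _ a) andbT; apply: contra wB => /eqP <-; exact: imset_f.
  - rewrite hsym (fe _ _ a) andbT; apply: contra wB => /eqP <-; exact: imset_f.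
have c3 : #|[set y | e (f i) y] :\ w| = 2.
  by move: (hcub (f i)); rewrite (cardsD1 w) inE ew => -[].
have cPN : #|f @: PN| = pdeg H i by rewrite card_imset // card_pdeg.
have d2 := comp_deg (ltn_ord i).
have eqs : f @: PN = [set y | e (f i) y] :\ w.
  by apply/eqP; rewrite eqEcard sub c3 cPN.
split; first by apply/eqP; rewrite eqn_leq d2 andbT -cPN -c3 subset_leq_card.
split.
- move=> y ey yw; have : y \in f @: PN by rewrite eqs !inE yw.
  by case/imsetP => j; rewrite inE => a ->; exists j.
- move=> w' ew' w'B; case: (eqVneq w' w) => // neq.
  have : w' \in f @: PN by rewrite eqs !inE neq.
  by case/imsetP => j _ eqj; move: w'B; rewrite eqj imset_f.
Qed.

Lemma okRP N n EK rs : okR N n EK rs -> checkRs N EK rs /\ n < size (flatten [seq r.2 | r <- rs]).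
Proof. by rewrite /okR => /andP. Qed.

Lemma pat_edge H (f : 'I_(Fnv H) -> T) rest x0 p q :
  embeds e (Fedges H) f -> (p, q) \in Fedges H ->
  e (nth x0 (map f (enum 'I_(Fnv H)) ++ rest) p) (nth x0 (map f (enum 'I_(Fnv H)) ++ rest) q).
Proof.
move=> [_ fe] pe; have /andP [hp hq] := allP (comp_rng H) _ pe.
have := nth_gs_f f rest x0 (Ordinal hp); have := nth_gs_f f rest x0 (Ordinal hq).
rewrite /= => -> ->; exact: fe.
Qed.

Lemma blk_common (P : {set {set T}}) (B : {set T}) H (f : 'I_(Fnv H) -> T) (rest : seq T) :
  B \in P -> embeds e (Fedges H) f -> B = [set f k | k in 'I_(Fnv H)] ->
  all (fun x => x \notin cover P) rest -> uniq rest ->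
  [/\ uniq (map f (enum 'I_(Fnv H)) ++ rest),
      {subset map f (enum 'I_(Fnv H)) ++ rest <= cover [set B] :|: ~: cover P} &
      #|cover [set B]| = Fnv H].
Proof.
move=> BP [fi fe] eB /allP ar ur; split.
- rewrite cat_uniq (map_inj_uniq fi) enum_uniq ur andbT /=.
  apply/hasP => -[x xr /mapP [k _ xk]]; move: (ar x xr); rewrite xk.
  by apply/negP/negPn; apply/in_cover; exists B => //; rewrite eB imset_f.
- move=> x; rewrite mem_cat => /orP [/mapP [k _ ->]|xr].
  + by rewrite inE cover1 eB imset_f.
  + by rewrite !inE (ar x xr) orbT.
- by rewrite cover1 eB card_imset // card_ord.
Qed.

Lemma confA P B H (f : 'I_(Fnv H) -> T) (i j : 'I_(Fnv H)) u :
  trivIset P -> (forall B, B \in P -> blk B) -> B \in P -> embeds e (Fedges H) f ->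
  B = [set f k | k in 'I_(Fnv H)] ->
  u \notin cover P -> e u (f i) -> e u (f j) -> condA H i j ->
  exists P', [/\ trivIset P', (forall B, B \in P' -> blk B) & #|cover P| < #|cover P'|].
Proof.
move=> tP bP BP emb eB uP ui uj cA.
have ar : all (fun x => x \notin cover P) [:: u] by rewrite /= uP.
have [ug sg cB] := @blk_common P B H f [:: u] BP emb eB ar erefl.
have := compA H; rewrite /allA => /allP /(_ i); rewrite mem_iota ltn_ord => /(_ erefl).
move=> /allP /(_ j); rewrite mem_iota ltn_ord => /(_ erefl) /implyP /(_ cA) /okRP [ch lt].
have szg : size ([seq f i | i <- enum 'I_(Fnv H)] ++ [:: u]) = (Fnv H) + 1.
  by rewrite size_cat size_map size_enum_ord.
rewrite addn1 in szg.
apply: (@step_gen P [set B] _ (EKA H i j) (lookup tabA H i j) u tP bP _ ug _ sg _ _).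
- by rewrite sub1set.
- apply: EKok_sym => p q; rewrite mem_cat => /orP [pe|]; first exact: pat_edge.
  have nn := nth_gs_r f [:: u] u 0; rewrite addn0 /= in nn.
  by rewrite !inE => /orP [] /eqP [-> ->]; rewrite nn nth_gs_f.
- by rewrite szg.
- by rewrite cB.
Qed.

Lemma confB P B H (f : 'I_(Fnv H) -> T) (i j : 'I_(Fnv H)) u z :
  trivIset P -> (forall B, B \in P -> blk B) -> B \in P -> embeds e (Fedges H) f ->
  B = [set f k | k in 'I_(Fnv H)] ->
  u \notin cover P -> z \notin cover P -> u != z ->
  e u (f i) -> e z (f j) -> e u z -> condB H i j ->
  exists P', [/\ trivIset P', (forall B, B \in P' -> blk B) & #|cover P| < #|cover P'|].
Proof.
move=> tP bP BP emb eB uP zP uz ui zj euz cB'.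
have ar : all (fun x => x \notin cover P) [:: u; z] by rewrite /= uP zP.
have ur : uniq [:: u; z] by rewrite /= inE uz.
have [ug sg cB] := @blk_common P B H f [:: u; z] BP emb eB ar ur.
have := compB H; rewrite /allB => /allP /(_ i); rewrite mem_iota ltn_ord => /(_ erefl).
move=> /allP /(_ j); rewrite mem_iota ltn_ord => /(_ erefl) /implyP /(_ cB') /okRP [ch lt].
have szg : size ([seq f i | i <- enum 'I_(Fnv H)] ++ [:: u; z]) = (Fnv H) + 2.
  by rewrite size_cat size_map size_enum_ord.
rewrite addn2 in szg.
apply: (@step_gen P [set B] _ (EKB H i j) (lookup tabB H i j) u tP bP _ ug _ sg _ _).
- by rewrite sub1set.
- apply: EKok_sym => p q; rewrite mem_cat => /orP [pe|]; first exact: pat_edge.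
  have nn := nth_gs_r f [:: u; z] u 0; rewrite addn0 /= in nn.
  have nz := nth_gs_r f [:: u; z] u 1; rewrite addn1 /= in nz.
  by rewrite !inE => /orP [/eqP [-> ->]|/orP [] /eqP [-> ->]];
    rewrite ?nn ?nz ?nth_gs_f.
- by rewrite szg.
- by rewrite cB.
Qed.

Lemma leaves (x u : T) : e x u -> exists p q, [/\ p != q, p != u, q != u, e x p & e x q].
Proof.
move=> exu.
have c2 : #|[set y | e x y] :\ u| = 2.
  by move: (hcub x); rewrite (cardsD1 u) inE exu => -[].
have [p [q [pq m]]] := enum2 c2.
have : p \in [set y | e x y] :\ u by rewrite m inE eqxx.
have : q \in [set y | e x y] :\ u by rewrite m !inE eqxx orbT.
rewrite !inE => /andP [qu exq] /andP [pu exp].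
by exists p, q.
Qed.

Lemma Lfree u : exists x y, [/\ e u x, e u y, x != y &
   (e x y \/ exists z, [/\ z != u, e x z & e y z])].
Proof.
case: (boolP [exists x, exists y, [&& e u x, e u y, x != y &
   (e x y || [exists z, [&& z != u, e x z & e y z]])]]).
  move=> /existsP [x /existsP [y /and4P [a b c /orP [d|/existsP [z /and3P [z1 z2 z3]]]]]].
    by exists x, y; split => //; left.
  by exists x, y; split => //; right; exists z.
move=> nb; exfalso.
have noadj x y : e u x -> e u y -> x != y -> ~~ e x y.
  move=> a b c; apply: contra nb => d; apply/existsP; exists x; apply/existsP; exists y.
  by rewrite a b c d.
have nocom x y z : e u x -> e u y -> x != y -> z != u -> e x z -> e y z -> False.
  move=> a b c z1 z2 z3; move/negP: nb; apply; apply/existsP; exists x; apply/existsP; exists y.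
  rewrite a b c /=; apply/orP; right; apply/existsP; exists z; by rewrite z1 z2 z3.
have [x1 [x2 [x3 [ux m]]]] := enum3 (hcub u).
have e1 : e u x1 by move: (m x1); rewrite !inE eqxx => ->.
have e2 : e u x2 by move: (m x2); rewrite !inE eqxx orbT => ->.
have e3 : e u x3 by move: (m x3); rewrite !inE eqxx !orbT => ->.
have n12 : x1 != x2 by apply/eqP => h; move: ux; rewrite h /= !inE eqxx.
have n13 : x1 != x3 by apply/eqP => h; move: ux; rewrite h /= !inE eqxx ?orbT.
have n23 : x2 != x3 by apply/eqP => h; move: ux; rewrite h /= !inE eqxx ?orbT ?andbF.
have n21 : x2 != x1 by rewrite eq_sym.
have n31 : x3 != x1 by rewrite eq_sym.
have n32 : x3 != x2 by rewrite eq_sym.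
have [p1 [q1 [d1 p1u q1u ex1p1 ex1q1]]] := leaves (etrans (hsym _ _) e1).
have [p2 [q2 [d2 p2u q2u ex2p2 ex2q2]]] := leaves (etrans (hsym _ _) e2).
have [p3 [q3 [d3 p3u q3u ex3p3 ex3q3]]] := leaves (etrans (hsym _ _) e3).
have d_u_x1 : u != x1.
  by apply/eqP => h; move: (e1); rewrite -h hirr.
have d_u_x2 : u != x2.
  by apply/eqP => h; move: (e2); rewrite -h hirr.
have d_u_x3 : u != x3.
  by apply/eqP => h; move: (e3); rewrite -h hirr.
have d_u_p1 : u != p1.
  by rewrite eq_sym p1u.
have d_u_q1 : u != q1.
  by rewrite eq_sym q1u.
have d_u_p2 : u != p2.
  by rewrite eq_sym p2u.
have d_u_q2 : u != q2.
  by rewrite eq_sym q2u.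
have d_u_p3 : u != p3.
  by rewrite eq_sym p3u.
have d_u_q3 : u != q3.
  by rewrite eq_sym q3u.
have d_x1_x2 : x1 != x2 := n12.
have d_x1_x3 : x1 != x3 := n13.
have d_x1_p1 : x1 != p1.
  by apply/eqP => h; move: (ex1p1); rewrite -h hirr.
have d_x1_q1 : x1 != q1.
  by apply/eqP => h; move: (ex1q1); rewrite -h hirr.
have d_x1_p2 : x1 != p2.
  by apply/eqP => h; move: (noadj _ _ e2 e1 n21); rewrite h ex2p2.
have d_x1_q2 : x1 != q2.
  by apply/eqP => h; move: (noadj _ _ e2 e1 n21); rewrite h ex2q2.
have d_x1_p3 : x1 != p3.
  by apply/eqP => h; move: (noadj _ _ e3 e1 n31); rewrite h ex3p3.
have d_x1_q3 : x1 != q3.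
  by apply/eqP => h; move: (noadj _ _ e3 e1 n31); rewrite h ex3q3.
have d_x2_x3 : x2 != x3 := n23.
have d_x2_p1 : x2 != p1.
  by apply/eqP => h; move: (noadj _ _ e1 e2 n12); rewrite h ex1p1.
have d_x2_q1 : x2 != q1.
  by apply/eqP => h; move: (noadj _ _ e1 e2 n12); rewrite h ex1q1.
have d_x2_p2 : x2 != p2.
  by apply/eqP => h; move: (ex2p2); rewrite -h hirr.
have d_x2_q2 : x2 != q2.
  by apply/eqP => h; move: (ex2q2); rewrite -h hirr.
have d_x2_p3 : x2 != p3.
  by apply/eqP => h; move: (noadj _ _ e3 e2 n32); rewrite h ex3p3.
have d_x2_q3 : x2 != q3.
  by apply/eqP => h; move: (noadj _ _ e3 e2 n32); rewrite h ex3q3.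
have d_x3_p1 : x3 != p1.
  by apply/eqP => h; move: (noadj _ _ e1 e3 n13); rewrite h ex1p1.
have d_x3_q1 : x3 != q1.
  by apply/eqP => h; move: (noadj _ _ e1 e3 n13); rewrite h ex1q1.
have d_x3_p2 : x3 != p2.
  by apply/eqP => h; move: (noadj _ _ e2 e3 n23); rewrite h ex2p2.
have d_x3_q2 : x3 != q2.
  by apply/eqP => h; move: (noadj _ _ e2 e3 n23); rewrite h ex2q2.
have d_x3_p3 : x3 != p3.
  by apply/eqP => h; move: (ex3p3); rewrite -h hirr.
have d_x3_q3 : x3 != q3.
  by apply/eqP => h; move: (ex3q3); rewrite -h hirr.
have d_p1_p2 : p1 != p2.
  by apply/eqP => h; apply: (nocom _ _ _ e1 e2 n12 p1u ex1p1); rewrite h ex2p2.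
have d_p1_q2 : p1 != q2.
  by apply/eqP => h; apply: (nocom _ _ _ e1 e2 n12 p1u ex1p1); rewrite h ex2q2.
have d_p1_p3 : p1 != p3.
  by apply/eqP => h; apply: (nocom _ _ _ e1 e3 n13 p1u ex1p1); rewrite h ex3p3.
have d_p1_q3 : p1 != q3.
  by apply/eqP => h; apply: (nocom _ _ _ e1 e3 n13 p1u ex1p1); rewrite h ex3q3.
have d_q1_p2 : q1 != p2.
  by apply/eqP => h; apply: (nocom _ _ _ e1 e2 n12 q1u ex1q1); rewrite h ex2p2.
have d_q1_q2 : q1 != q2.
  by apply/eqP => h; apply: (nocom _ _ _ e1 e2 n12 q1u ex1q1); rewrite h ex2q2.
have d_q1_p3 : q1 != p3.
  by apply/eqP => h; apply: (nocom _ _ _ e1 e3 n13 q1u ex1q1); rewrite h ex3p3.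
have d_q1_q3 : q1 != q3.
  by apply/eqP => h; apply: (nocom _ _ _ e1 e3 n13 q1u ex1q1); rewrite h ex3q3.
have d_p2_p3 : p2 != p3.
  by apply/eqP => h; apply: (nocom _ _ _ e2 e3 n23 p2u ex2p2); rewrite h ex3p3.
have d_p2_q3 : p2 != q3.
  by apply/eqP => h; apply: (nocom _ _ _ e2 e3 n23 p2u ex2p2); rewrite h ex3q3.
have d_q2_p3 : q2 != p3.
  by apply/eqP => h; apply: (nocom _ _ _ e2 e3 n23 q2u ex2q2); rewrite h ex3p3.
have d_q2_q3 : q2 != q3.
  by apply/eqP => h; apply: (nocom _ _ _ e2 e3 n23 q2u ex2q2); rewrite h ex3q3.
pose lst := [:: u; x1; x2; x3; p1; q1; p2; q2; p3; q3].
have ul : uniq lst.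
  by rewrite /lst /= !inE !negb_or d_u_x1 d_u_x2 d_u_x3 d_u_p1 d_u_q1 d_u_p2 d_u_q2 d_u_p3 d_u_q3 d_x1_x2 d_x1_x3 d_x1_p1 d_x1_q1 d_x1_p2 d_x1_q2 d_x1_p3 d_x1_q3 d_x2_x3 d_x2_p1 d_x2_q1 d_x2_p2 d_x2_q2 d_x2_p3 d_x2_q3 d_x3_p1 d_x3_q1 d_x3_p2 d_x3_q2 d_x3_p3 d_x3_q3 d1 d_p1_p2 d_p1_q2 d_p1_p3 d_p1_q3 d_q1_p2 d_q1_q2 d_q1_p3 d_q1_q3 d2 d_p2_p3 d_p2_q3 d_q2_p3 d_q2_q3 d3.
apply: hL; exists (fun k => nth u lst k); split.
- move=> i j /eqP; rewrite nth_uniq // => /eqP; exact: val_inj.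
- move=> i j; have : all (fun ab => e (nth u lst ab.1) (nth u lst ab.2)) L_edges.
    by rewrite /= e1 e2 e3 ex1p1 ex1q1 ex2p2 ex2q2 ex3p3 ex3q3.
  by move/allP => h /h.
Qed.

Lemma addblk (P : {set {set T}}) gs EK rs x0 :
  trivIset P -> (forall B, B \in P -> blk B) -> uniq gs ->
  (forall p q, (p, q) \in EK -> e (nth x0 gs p) (nth x0 gs q)) ->
  all (fun x => x \notin cover P) gs -> checkRs (size gs) EK rs ->
  0 < size (flatten [seq r.2 | r <- rs]) ->
  exists P', [/\ trivIset P', (forall B, B \in P' -> blk B) & #|cover P| < #|cover P'|].
Proof.
move=> tP bP ug ek /allP al ch lt.
apply: (@step_gen P set0 gs EK rs x0 tP bP _ ug ek _ ch).
- exact: sub0set.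
- by move=> x /al xP; rewrite !inE xP orbT.
- by rewrite /cover big_set0 cards0.
Qed.

Lemma blk_of (P : {set {set T}}) x : (forall B, B \in P -> blk B) -> x \in cover P ->
  exists B H (f : 'I_(Fnv H) -> T) i,
    [/\ B \in P, embeds e (Fedges H) f, B = [set f k | k in 'I_(Fnv H)] & x = f i].
Proof.
move=> bP /in_cover [B BP xB]; have [H [f [emb eB]]] := bP B BP.
move: xB; rewrite eB => /imsetP [i _ ->].
by exists B, H, f, i.
Qed.

Lemma adjC H i j : adj H i j = adj H j i.
Proof. by rewrite /adj orbC. Qed.

Lemma step (P : {set {set T}}) : trivIset P -> (forall B, B \in P -> blk B) ->
  cover P != [set: T] ->
  exists P', [/\ trivIset P', (forall B, B \in P' -> blk B) & #|cover P| < #|cover P'|].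
Proof.
move=> tP bP cP.
have : ~~ ([set: T] \subset cover P).
  by apply: contra cP => sc; rewrite eqEsubset subsetT sc.
case/subsetPn => u _ uP.
have neqE a b : e a b -> a != b.
  by move=> ab; apply/eqP => h; move: ab; rewrite h hirr.
have notinB B a : B \in P -> a \notin cover P -> a \notin B.
  by move=> BP; apply: contra => aB; apply/in_cover; exists B.
have tri x y : e u x -> e u y -> x != y -> e x y -> x \in cover P ->
  exists P', [/\ trivIset P', (forall B, B \in P' -> blk B) & #|cover P| < #|cover P'|].
  move=> ux uy xy exy /(blk_of bP) [B [H [f [i [BP emb eB xi]]]]]; subst x.
  have uB : u \notin [set f k | k in 'I_(Fnv H)] by rewrite -eB; exact: notinB.
  have [pi [oi oi']] := out_deg emb (etrans (hsym _ _) ux) uB.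
  have yu : y != u by rewrite eq_sym neqE.
  case: (boolP (y \in B)) => yB; last first.
    have yB' : y \notin [set f k | k in 'I_(Fnv H)] by rewrite -eB.
    by move: (oi' y exy yB') => h; move: yu; rewrite h eqxx.
  move: (yB); rewrite eB => /imsetP [j _ yj]; subst y.
  have [j' a yj'] := oi _ exy yu.
  have jj : j' = j by apply: (proj1 emb); rewrite -yj'.
  subst j'.
  have [pj _] := out_deg emb (etrans (hsym _ _) uy) uB.
  apply: (confA tP bP BP emb eB uP ux uy).
  rewrite /condA pi pj a /= !andbT; apply: contra xy => /eqP ij.
  by rewrite (_ : i = j) //; apply: val_inj.
have c4 x y z : e u x -> e u y -> x != y -> z != u -> e x z -> e y z -> x \in cover P ->
  exists P', [/\ trivIset P', (forall B, B \in P' -> blk B) & #|cover P| < #|cover P'|].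
  move=> ux uy xy zu xz yz /(blk_of bP) [B [H [f [i [BP emb eB xi]]]]]; subst x.
  have uB : u \notin [set f k | k in 'I_(Fnv H)] by rewrite -eB; exact: notinB.
  have [pi [oi oi']] := out_deg emb (etrans (hsym _ _) ux) uB.
  case: (boolP (z \in B)) => zB; last first.
    have zB' : z \notin [set f k | k in 'I_(Fnv H)] by rewrite -eB.
    by move: (oi' z xz zB') => h; move: zu; rewrite h eqxx.
  move: (zB); rewrite eB => /imsetP [k _ zk]; subst z.
  have [k' a zk'] := oi _ xz zu.
  have kk : k' = k by apply: (proj1 emb); rewrite -zk'.
  subst k'.
  case: (boolP (y \in cover P)) => yP.
  - have yB : y \in B.
      move: (yP) => /(blk_of bP) [B' [H' [f' [j' [B'P emb' eB' yj']]]]]; subst y.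
      have uB' : u \notin [set f' k | k in 'I_(Fnv H')] by rewrite -eB'; exact: notinB.
      have [_ [_ oj']] := out_deg emb' (etrans (hsym _ _) uy) uB'.
      have zB' : f k \in B'.
        rewrite eB'; apply/negPn/negP => h.
        by move: (oj' (f k) yz h) => h'; move: zu; rewrite h' eqxx.
      case: (eqVneq B B') => [-> |nBB]; first by rewrite eB' imset_f.
      by move/trivIsetP: tP => /(_ B B' BP B'P nBB) /disjP /(_ (f k) zB); rewrite zB'.
    move: (yB); rewrite eB => /imsetP [j _ yj]; subst y.
    have [pj [oj _]] := out_deg emb (etrans (hsym _ _) uy) uB.
    have [k2 b zk2] := oj _ yz zu.
    have kk : k2 = k by apply: (proj1 emb); rewrite -zk2.
    subst k2.
    apply: (confA tP bP BP emb eB uP ux uy).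
    rewrite /condA pi pj /=; apply/andP; split.
      rewrite !andbT; apply: contra xy => /eqP ij.
      by rewrite (_ : i = j) //; apply: val_inj.
    apply/orP; right; apply/hasP; exists (k : nat); first by rewrite mem_iota ltn_ord.
    by rewrite a adjC b.
  - have yB : y \notin [set f k | k in 'I_(Fnv H)] by rewrite -eB; exact: notinB.
    have [pk _] := out_deg emb (etrans (hsym _ _) yz) yB.
    apply: (confB tP bP BP emb eB uP yP _ ux yz).
    + by apply/negP => /eqP h; move: uy; rewrite h hirr.
    + by [].

    + by rewrite /condB pi pk a.
have [x [y [ux uy xy [exy | [z [zu xz yz]]]]]] := Lfree u.
- case: (boolP (x \in cover P)) => xP; first exact: (tri x y).
  case: (boolP (y \in cover P)) => yP.
    by apply: (tri y x) => //; [rewrite eq_sym | rewrite hsym].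
  apply: (@addblk P [:: u; x; y] (symE [:: (0,1); (1,2); (2,0)]) [:: (FC3, [:: 0; 1; 2])] u)
    => //.
  + by rewrite /= !inE negb_or xy !neqE.
  + apply: EKok_sym => p q; rewrite !inE => /orP [/eqP [-> ->]|/orP [] /eqP [-> ->]] //=.
    by rewrite hsym.
  + by rewrite /= uP xP yP.
- case: (boolP (x \in cover P)) => xP; first exact: (c4 x y z).
  case: (boolP (y \in cover P)) => yP.
    by apply: (c4 y x z) => //; rewrite eq_sym.
  case: (boolP (z \in cover P)) => zP.
    move: zP => /(blk_of bP) [B [H [f [k [BP emb eB zk]]]]]; subst z.
    have xB : x \notin [set f k | k in 'I_(Fnv H)] by rewrite -eB; exact: notinB.
    have yB : y \notin [set f k | k in 'I_(Fnv H)] by rewrite -eB; exact: notinB.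
    have [_ [_ o]] := out_deg emb (etrans (hsym _ _) xz) xB.
    by move: xy; rewrite (o y (etrans (hsym _ _) yz) yB) eqxx.
  apply: (@addblk P [:: u; x; z; y] (symE [:: (0,1); (1,2); (2,3); (3,0)])
     [:: (FC4, [:: 0; 1; 2; 3])] u) => //.
  + by rewrite /= !inE !negb_or xy (neqE _ _ ux) (neqE _ _ uy) (neqE _ _ xz) (eq_sym u z) zu
      (neqE _ _ (etrans (hsym _ _) yz)).
  + apply: EKok_sym => p q; rewrite !inE => /orP [/eqP [-> ->]|/orP [/eqP [-> ->]|/orP [] /eqP [-> ->]]] //=;
    by rewrite hsym.
  + by rewrite /= uP xP yP zP.
Qed.
End Main.

Theorem lemma2p3 (T : finType) (e : rel T) :
  symmetric e -> irreflexive e -> cubic e -> ~ contains_L e -> F_partitioning e.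
Proof.
move=> hsym hirr hcub hL.
have st := step hsym hirr hcub hL.
suff: forall m (P : {set {set T}}), trivIset P -> (forall B, B \in P -> blk e B) ->
    #|T| - #|cover P| <= m ->
    exists P', [/\ trivIset P', (forall B, B \in P' -> blk e B) & cover P' = [set: T]].
  move/(_ #|T| set0); case.
  - by apply/trivIsetP => A B; rewrite inE.
  - by move=> B; rewrite inE.
  - exact: leq_subr.
  move=> P [tP bP cP]; exists P; split => //.
  apply/and3P; split => //; first by rewrite cP.
  apply/negP => /bP [H [f [_ e0]]].
  have i0 : 'I_(Fnv H) by apply: (@Ordinal _ 0); case: H f e0.
  by move: (imset_f f (isT : i0 \in 'I_(Fnv H))); rewrite -e0 inE.
elim => [|m IH] P tP bP lm.
  exists P; split => //; apply/eqP; rewrite eqEcard subsetT cardsT.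
  by move: lm; rewrite leqn0 subn_eq0.
case: (eqVneq (cover P) [set: T]) => [cP|cP]; first by exists P.
have [P' [tP' bP' lt]] := st P tP bP cP.
apply: (IH P' tP' bP').
have : #|cover P'| <= #|T| by rewrite -cardsT subset_leq_card ?subsetT.
move: lm lt; clear; lia.
Qed.
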